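(* Given a network, assume hosts generate IPv6 addresses using Cryptographically Generated Addresses (CGA) with security parameter $0 \leq \mathit{sec} \leq 7$. Then the expected number of hash function evaluations required for an attacker to spoof a specific (target) address is \[ T_{CGA} = \begin{cases} 2^{59} & \text{if } \mathit{sec} = 0,\\ 2^{59} + \dfrac{2^{16\cdot \mathit{sec}+59}}{3} & \text{if } \mathit{sec} > 0. \end{cases} \]
   Context: An IPv6 address is 128 bits: the leftmost 64 bits are the subnet prefix and the rightmost 64 bits are the interface identifier. In CGA, a host forms a CGA Parameters data structure consisting of a 128-bit modifier, the 64-bit subnet prefix, an 8-bit collision count taking only the values 0, 1 or 2, the host's (DER-encoded) public key, and an extension field (empty by default). The address carries a 3-bit security parameter $\mathit{sec}\in\{0,\dots,7\}$ in the three leftmost bits of its interface identifier. Hash2 is the leftmost 112 bits of the hash of the CGA Parameters data structure with subnet prefix and collision count set to zero; Hash1 is the leftmost 64 bits of the hash of the full CGA Parameters data structure. Generation: the host iterates the modifier until the leftmost $16\cdot\mathit{sec}$ bits of Hash2 are zero (skipped if $\mathit{sec}=0$), then computes Hash1, and the interface identifier is Hash1 with the three leftmost bits replaced by $\mathit{sec}$ and the $u$ and $g$ bits (the 6th and 7th leftmost bits, counting from 0) set to zero; the address is subnet prefix concatenated with interface identifier. If a duplicate address is detected, the collision count is incremented and Hash1 recomputed (at most values 0,1,2). Verification of an address against a CGA Parameters data structure checks: collision count $\le 2$; subnet prefix matches the address; recomputed Hash1 matches the interface identifier (ignoring the $\mathit{sec}$, $u$, $g$ bits, so 59 bits must match);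 the leftmost $16\cdot\mathit{sec}$ bits of recomputed Hash2 are zero. Spoofing a specific address means finding a CGA Parameters data structure containing the attacker's own public key that passes verification for the target address. Hash outputs are modeled as uniformly random, and cost is measured in the number of hash function evaluations (each computation of Hash1 or Hash2 counts as one evaluation). *)

(* Defs.v *)
From Stdlib Require Import Reals List.
From Coquelicot Require Import Coquelicot.
Open Scope R_scope.

(* Probabilistic model of the brute-force spoofing attack on a CGA address
   (random-oracle model, as in the paper's cost analysis).

   The attacker (who must use its own public key) repeatedly picks a fresh
   modifier.  For each modifier:
   - if sec > 0 it evaluates Hash2 once (cost 1); the modifier is usable iff
     the leftmost 16*sec bits of Hash2 are zero, probability 2^-(16*sec).
     If sec = 0 no Hash2 is computed and every modifier is usable.
   - for a usable modifier it evaluates Hash1 for the three admissible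
     collision counts 0,1,2 (cost 3); each must match the 59 non-sec/u/g bits
     of the target interface identifier, giving 3 chances of 2^-59 each, i.e.
     success probability 3 * 2^-59 per usable modifier.
   The attack stops at the first successful modifier. *)

Definition num_collision_counts : nat := 3.
Definition matched_bits : nat := 59.

Definition hash2_pass_prob (sec : nat) : R :=
  if Nat.eqb sec 0 then 1 else / 2 ^ (16 * sec).
Definition hash2_cost (sec : nat) : R :=
  if Nat.eqb sec 0 then 0 else 1.
Definition hash1_cost : R := INR num_collision_counts.
Definition modifier_success_prob : R :=
  INR num_collision_counts * / 2 ^ matched_bits.

Inductive fail_kind : Type := FailHash2 | FailHash1.

Definition fail_prob (sec : nat) (k : fail_kind) : R :=
  match k with
  | FailHash2 => 1 - hash2_pass_prob sec
  | FailHash1 => hash2_pass_prob sec * (1 - modifier_success_prob)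
  end.
Definition fail_cost (sec : nat) (k : fail_kind) : R :=
  match k with
  | FailHash2 => hash2_cost sec
  | FailHash1 => hash2_cost sec + hash1_cost
  end.
Definition win_prob (sec : nat) : R := hash2_pass_prob sec * modifier_success_prob.
Definition win_cost (sec : nat) : R := hash2_cost sec + hash1_cost.

Fixpoint fail_seqs (n : nat) : list (list fail_kind) :=
  match n with
  | O => nil :: nil
  | S m => flat_map (fun l => (FailHash2 :: l) :: (FailHash1 :: l) :: nil) (fail_seqs m)
  end.

(* a run = a sequence of failed trials followed by a successful one *)
Definition run_prob (sec : nat) (l : list fail_kind) : R :=
  fold_right (fun k acc => fail_prob sec k * acc) 1 l * win_prob sec.
Definition run_cost (sec : nat) (l : list fail_kind) : R :=
  fold_right (fun k acc => fail_cost sec k + acc) 0 l + win_cost sec.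

(* contribution to the expected cost of runs with exactly n failed trials;
   the expected number of hash evaluations is the sum of this series *)
Definition expected_cost_term (sec : nat) (n : nat) : R :=
  fold_right Rplus 0 (map (fun l => run_prob sec l * run_cost sec l) (fail_seqs n)).

Definition T_CGA (sec : nat) : R :=
  if Nat.eqb sec 0 then 2 ^ 59
  else 2 ^ 59 + 2 ^ (16 * sec + 59) / 3.

(* Main.v *)
Require Import Defs.
From Stdlib Require Import Reals Lra Lia List.
From Coquelicot Require Import Coquelicot.
Open Scope R_scope.

Definition sumL (g : list fail_kind -> R) (L : list (list fail_kind)) : R :=
  fold_right Rplus 0 (map g L).

Lemma sumL_flat (g : list fail_kind -> R) L :
  sumL g (flat_map (fun l => (FailHash2 :: l) :: (FailHash1 :: l) :: nil) L)
  = sumL (fun l => g (FailHash2 :: l) + g (FailHash1 :: l)) L.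
Proof.
  induction L as [|x L IH]; simpl; [reflexivity|].
  unfold sumL in *. simpl. rewrite IH. ring.
Qed.

Lemma sumL_lin (g h : list fail_kind -> R) a b L :
  sumL (fun l => a * g l + b * h l) L = a * sumL g L + b * sumL h L.
Proof.
  induction L as [|x L IH]; unfold sumL in *; simpl; [ring|].
  rewrite IH. ring.
Qed.

Lemma sumL_ext (g h : list fail_kind -> R) L :
  (forall l, g l = h l) -> sumL g L = sumL h L.
Proof.
  intros H; induction L as [|x L IH]; unfold sumL in *; simpl; [ring|].
  rewrite IH, H. ring.
Qed.

Definition Pl sec (l : list fail_kind) := fold_right (fun k acc => fail_prob sec k * acc) 1 l.
Definition Cl sec (l : list fail_kind) := fold_right (fun k acc => fail_cost sec k + acc) 0 l.
Definition qq sec := fail_prob sec FailHash2 + fail_prob sec FailHash1.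
Definition AA sec := fail_prob sec FailHash2 * fail_cost sec FailHash2
                    + fail_prob sec FailHash1 * fail_cost sec FailHash1.

Lemma sumP sec n : sumL (Pl sec) (fail_seqs n) = qq sec ^ n.
Proof.
  induction n as [|n IH]; [unfold sumL; simpl; ring|].
  simpl fail_seqs. rewrite sumL_flat.
  rewrite (sumL_ext _ (fun l => fail_prob sec FailHash2 * Pl sec l + fail_prob sec FailHash1 * Pl sec l)).
  2:{ intros l; reflexivity. }
  rewrite sumL_lin, IH. unfold qq. simpl. ring.
Qed.

Lemma sumC sec n : sumL (fun l => Pl sec l * Cl sec l) (fail_seqs n)
   = INR n * AA sec * qq sec ^ (pred n).
Proof.
  induction n as [|n IH]; [unfold sumL; simpl; ring|].
  simpl fail_seqs. rewrite sumL_flat.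
  rewrite (sumL_ext _ (fun l => AA sec * Pl sec l + qq sec * (Pl sec l * Cl sec l))).
  2:{ intros l; unfold Pl, Cl, AA, qq; simpl. ring. }
  rewrite sumL_lin, IH, sumP.
  destruct n; simpl; ring.
Qed.

Lemma term_eq sec n : expected_cost_term sec n =
  win_prob sec * (INR n * AA sec * qq sec ^ (pred n) + win_cost sec * qq sec ^ n).
Proof.
  unfold expected_cost_term. fold (sumL (fun l => run_prob sec l * run_cost sec l) (fail_seqs n)).
  rewrite (sumL_ext _ (fun l => win_prob sec * (Pl sec l * Cl sec l) + (win_prob sec * win_cost sec) * Pl sec l)).
  2:{ intros l; unfold run_prob, run_cost, Pl, Cl. ring. }
  rewrite sumL_lin, sumC, sumP. ring.
Qed.

Lemma deriv_geom q : 0 <= q < 1 ->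
  is_series (fun n => INR n * q ^ (pred n)) (/ (1 - q) * / (1 - q)).
Proof.
  intros Hq.
  assert (Hg : is_series (fun n => q ^ n) (/ (1 - q))).
  { apply is_series_geom. rewrite Rabs_right; lra. }
  assert (Hm := is_series_mult_pos _ _ _ _ Hg Hg
                  (fun n => pow_le q n (proj1 Hq)) (fun n => pow_le q n (proj1 Hq))).
  apply is_series_decr_1.
  match goal with |- is_series _ ?l => replace l with (/ (1 - q) * / (1 - q)) end.
  2:{ cbn. ring. }
  eapply is_series_ext; [|exact Hm].
  intros n. simpl.
  assert (H : forall m, (m <= n)%nat -> sum_f_R0 (fun k => q ^ k * q ^ (n - k)) m = INR (S m) * q ^ n).
  { intros m; induction m as [|m IH]; intros Hm'.
    - simpl. rewrite Nat.sub_0_r. ring.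
    - rewrite tech5, IH by lia. rewrite <- pow_add.
      replace (S m + (n - S m))%nat with n by lia.
      rewrite (S_INR (S m)). ring. }
  rewrite H by lia. rewrite S_INR. destruct n; simpl; ring.
Qed.

Lemma qq_eq sec : qq sec = 1 - win_prob sec.
Proof. unfold qq, win_prob, fail_prob. ring. Qed.

Theorem lemma1 (sec : nat) (Hsec : (sec <= 7)%nat) :
  is_series (expected_cost_term sec) (T_CGA sec).
Proof.
  assert (Hw : 0 < win_prob sec <= 1).
  { unfold win_prob, modifier_success_prob, hash2_pass_prob, num_collision_counts, matched_bits.
    assert (H59 : 4 <= 2 ^ 59) by (replace 4 with (2^2) by ring; apply Rle_pow; [lra|lia]).
    assert (Hs : 0 < INR 3 * / 2 ^ 59 <= 1).
    { simpl INR. split.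
      - apply Rmult_lt_0_compat; [lra|apply Rinv_0_lt_compat; lra].
      - apply (Rmult_le_reg_r (2^59)); [lra|]. rewrite Rmult_assoc, Rinv_l by lra. lra. }
    destruct (Nat.eqb sec 0).
    - lra.
    - assert (Hp : 1 <= 2 ^ (16 * sec)) by (apply pow_R1_Rle; lra).
      assert (0 < / 2 ^ (16 * sec) <= 1).
      { split; [apply Rinv_0_lt_compat; lra|].
        rewrite <- Rinv_1. apply Rinv_le_contravar; lra. }
      split; [apply Rmult_lt_0_compat; lra|].
      replace 1 with (1*1) by ring. apply Rmult_le_compat; lra. }
  set (q := qq sec).
  assert (Hq : 0 <= q < 1) by (unfold q; rewrite qq_eq; lra).
  assert (H1 := is_series_scal_r (AA sec) _ _ (deriv_geom q Hq)).
  assert (H2 := is_series_scal_r (win_cost sec) _ _ (is_series_geom q ltac:(rewrite Rabs_right; lra))).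
  assert (H3 := is_series_plus _ _ _ _ H1 H2).
  assert (H4 := is_series_scal_l (win_prob sec) _ _ H3).
  match type of H4 with is_series _ ?l => replace (T_CGA sec) with l end.
  { eapply is_series_ext; [|exact H4]. intros n. rewrite term_eq. fold q. cbn. ring. }
  cbn. unfold q. rewrite qq_eq. replace (1 - (1 - win_prob sec)) with (win_prob sec) by ring.
  replace (win_prob sec * (/ win_prob sec * / win_prob sec * AA sec + / win_prob sec * win_cost sec))
    with (AA sec / win_prob sec + win_cost sec) by (field; lra).
  clear - Hw. unfold AA, T_CGA, win_prob, win_cost, fail_prob, fail_cost, modifier_success_prob,
    hash2_pass_prob, hash2_cost, hash1_cost, num_collision_counts, matched_bits in *.
  destruct sec as [|k]; simpl Nat.eqb in *; simpl INR in *.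
  - cbv iota. field.
  - cbv iota. rewrite pow_add. assert (2 ^ (16 * S k) <> 0) by (apply pow_nonzero; lra).
    assert (2 ^ 59 <> 0) by (apply pow_nonzero; lra).
    field. auto.
Qed.
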